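(* Let $T\in\mathcal{K}(V)$ with $\rho_S(T)\neq\emptyset$ and let $E_1,E_2$ be projections on $V$ (i.e. $E_i\in\mathcal{B}(V)$, $E_i^2=E_i$) such that $E_1+E_2=\mathcal{I}$ (hence $E_1E_2=E_2E_1=0$). Denote $V_i:=E_i(V)$ and $\operatorname{dom}(T_i):=E_i(\operatorname{dom}(T))$, and assume that $\operatorname{dom}(T_i)\subset\operatorname{dom}(T)$, $T(\operatorname{dom}(T_i))\subset V_i$ and that $T_i:=T|_{\operatorname{dom}(T_i)}$ is a closed operator on the right Banach module $V_i$, $i=1,2$. Then (i) $E_iTv=TE_iv$ for $v\in\operatorname{dom}(T)$; (ii) $\operatorname{dom}(T_i^2)=E_i(\operatorname{dom}(T^2))$ for $i\in\{1,2\}$; (iii) $\operatorname{ran}(\mathcal{Q}_s(T))=\operatorname{ran}(\mathcal{Q}_s(T_1))\oplus\operatorname{ran}(\mathcal{Q}_s(T_2))$ for every $s\in\mathbb{F}_0$; (iv) $\sigma_S(T)=\sigma_S(T_1)\cup\sigma_S(T_2)$; (v) $\sigma_{Sp}(T)=\sigma_{Sp}(T_1)\cup\sigma_{Sp}(T_2)$. If moreover $\sigma_S(T_1)\cap\sigma_S(T_2)=\emptyset$, then (vi) $\sigma_{Sc}(T)=\sigma_{Sc}(T_1)\cup\sigma_{Sc}(T_2)$ and (vii) $\sigma_{Sr}(T)=\sigma_{Sr}(T_1)\cup\sigma_{Sr}(T_2)$.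
   Context: Standing setting: either (a) $\mathbb{F}_0=\mathbb{F}=\mathbb{H}$, $V$ a two-sided quaternionic Banach space, $\mathcal{K}(V)$ the closed right linear operators on $V$; or (b) $\mathbb{F}=\mathbb{R}_n$ the real Clifford algebra generated by $e_1,\dots,e_n$, $\mathbb{F}_0=\mathbb{R}^{n+1}$ the paravectors $x_0+\sum x_ie_i$, $V=V_{\mathbb{R}}\otimes\mathbb{R}_n$ for a real Banach space $V_{\mathbb{R}}$, $\mathcal{K}(V)$ the operators of paravector type $T=T_0+\sum_{i=1}^nT_ie_i$ with closed $T_i$ on $V_{\mathbb{R}}$. $\mathcal{B}(V)$ bounded everywhere defined right linear operators, $\mathcal{I}$ identity. For a closed right linear operator $A$ on a right Banach module $W$ (here $W=V$ or $W=V_i$) and $s\in\mathbb{F}_0$, $\mathcal{Q}_s(A)=A^2-2\Re(s)A+|s|^2\mathcal{I}$ on $\operatorname{dom}(A^2)$; $\rho_S(A)=\{s\in\mathbb{F}_0:\mathcal{Q}_s(A)$ has a bounded inverse defined on all of $W\}$, $\sigma_S(A)=\mathbb{F}_0\setminus\rho_S(A)$. The point $S$-spectrum $\sigma_{Sp}(A)$ is the set of $s\in\mathbb{F}_0$ with $\ker\mathcal{Q}_s(A)\neq\{0\}$; the continuous $S$-spectrum $\sigma_{Sc}(A)$ is the set of $s$ with $\ker\mathcal{Q}_s(A)=\{0\}$ and $\operatorname{ran}\mathcal{Q}_s(A)$ dense in but different from $W$; the residual $S$-spectrum $\sigma_{Sr}(A)$ is the set of $s$ with $\ker\mathcal{Q}_s(A)=\{0\}$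 and $\operatorname{ran}\mathcal{Q}_s(A)$ not dense in $W$. $\oplus$ denotes a direct sum of right submodules. *)

(* Defs.v *)
From HB Require Import structures.
From mathcomp Require Import all_boot all_order all_algebra.
From mathcomp Require Import all_classical all_reals all_analysis.
Set Implicit Arguments. Unset Strict Implicit. Unset Printing Implicit Defensive.
Import Order.TTheory GRing.Theory Num.Theory.
Import numFieldNormedType.Exports.
Local Open Scope classical_set_scope.
Local Open Scope ring_scope.

(* An operator: a domain and an action (values outside dom irrelevant). *)
Record op (W : Type) := Op { dom : set W ; app : W -> W }.

Section Generic.
Variables (R : realType) (W : lmodType R).

Definition nconv (nrm : W -> R) (u : nat -> W) (x : W) : Prop :=
  (fun k => nrm (u k - x)) @ \oo --> (0 : R).

Definition real_lin_op (A : op W) : Prop :=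
  dom A 0 /\
  (forall v w, dom A v -> dom A w -> dom A (v + w) /\ app A (v + w) = app A v + app A w) /\
  (forall (r : R) v, dom A v -> dom A (r *: v) /\ app A (r *: v) = r *: app A v).

Definition right_lin_op (F : Type) (rm : W -> F -> W) (A : op W) : Prop :=
  real_lin_op A /\
  (forall v a, dom A v -> dom A (rm v a) /\ app A (rm v a) = rm (app A v) a).

Definition closed_in (nrm : W -> R) (S : set W) (A : op W) : Prop :=
  forall (u : nat -> W) x y, (forall k, dom A (u k)) -> S x -> S y ->
    nconv nrm u x -> nconv nrm (fun k => app A (u k)) y ->
    dom A x /\ app A x = y.

Definition bdd_rlin (F : Type) (rm : W -> F -> W) (nrm : W -> R) (E : W -> W) : Prop :=
  (forall v w, E (v + w) = E v + E w) /\
  (forall (r : R) v, E (r *: v) = r *: E v) /\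
  (forall v a, E (rm v a) = rm (E v) a) /\
  (exists C : R, forall v, nrm (E v) <= C * nrm v).

Section Spectra.
Variables (nrm : W -> R) (F0 : Type) (re : F0 -> R) (sqn : F0 -> R).
(* re s = Re(s), sqn s = |s|^2 *)

Definition dom2 (A : op W) : set W := [set x | dom A x /\ dom A (app A x)].

Definition Qs (A : op W) (s : F0) (x : W) : W :=
  app A (app A x) - (2 * re s) *: app A x + sqn s *: x.

Definition ranQ (A : op W) (s : F0) : set W :=
  [set y | exists2 x, dom2 A x & Qs A s x = y].

Definition Q_injective (A : op W) (s : F0) : Prop :=
  forall x, dom2 A x -> Qs A s x = 0 -> x = 0.

Definition dense_in (S D : set W) : Prop :=
  forall y, S y -> forall e : R, 0 < e -> exists2 x, D x & nrm (y - x) < e.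

(* S-resolvent set relative to the ambient module S (= V or V_i) *)
Definition rhoS (S : set W) (A : op W) : set F0 :=
  [set s | exists B : W -> W,
      (forall y, S y -> dom2 A (B y) /\ Qs A s (B y) = y) /\
      (forall x, dom2 A x -> B (Qs A s x) = x) /\
      (exists C : R, forall y, S y -> nrm (B y) <= C * nrm y)].

Definition sigmaS (S : set W) (A : op W) : set F0 := ~` rhoS S A.

Definition sigmaSp (A : op W) : set F0 :=
  [set s | exists x, [/\ dom2 A x, Qs A s x = 0 & x <> 0]].

Definition sigmaSc (S : set W) (A : op W) : set F0 :=
  [set s | [/\ Q_injective A s, dense_in S (ranQ A s) & ranQ A s <> S]].

Definition sigmaSr (S : set W) (A : op W) : set F0 :=
  [set s | Q_injective A s /\ ~ dense_in S (ranQ A s)].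

Definition restr_op (T : op W) (E : W -> W) : op W := Op (E @` dom T) (app T).

(* the hypotheses on T, E1, E2 other than membership in K(V), B(V) *)
Definition decomp_hyps (T : op W) (E1 E2 : W -> W) : Prop :=
  (exists s, rhoS setT T s) /\
  (forall v, E1 (E1 v) = E1 v) /\ (forall v, E2 (E2 v) = E2 v) /\
  (forall v, E1 v + E2 v = v) /\
  (forall E, E = E1 \/ E = E2 ->
     [/\ E @` dom T `<=` dom T,
         app T @` (E @` dom T) `<=` range E &
         closed_in nrm (range E) (restr_op T E)]).

Definition direct_sum_eq (X Y Z : set W) : Prop :=
  X = [set y + z | y in Y & z in Z] /\ Y `&` Z = [set 0].

Definition thm17_concl (T : op W) (E1 E2 : W -> W) : Prop :=
  let T1 := restr_op T E1 in let T2 := restr_op T E2 in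
  let V1 := range E1 in let V2 := range E2 in
  (forall E, E = E1 \/ E = E2 -> forall v, dom T v -> E (app T v) = app T (E v)) /\
  (forall E, E = E1 \/ E = E2 -> dom2 (restr_op T E) = E @` dom2 T) /\
  (forall s, direct_sum_eq (ranQ T s) (ranQ T1 s) (ranQ T2 s)) /\
  sigmaS setT T = sigmaS V1 T1 `|` sigmaS V2 T2 /\
  sigmaSp T = sigmaSp T1 `|` sigmaSp T2 /\
  (sigmaS V1 T1 `&` sigmaS V2 T2 = set0 ->
   sigmaSc setT T = sigmaSc V1 T1 `|` sigmaSc V2 T2 /\
   sigmaSr setT T = sigmaSr V1 T1 `|` sigmaSr V2 T2).

End Spectra.
End Generic.

Section Quat.
Variable R : realType.

Record quat := Quat { q0 : R ; q1 : R ; q2 : R ; q3 : R }.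

Definition qadd (a b : quat) : quat :=
  Quat (q0 a + q0 b) (q1 a + q1 b) (q2 a + q2 b) (q3 a + q3 b).

Definition qmul (a b : quat) : quat :=
  Quat (q0 a * q0 b - q1 a * q1 b - q2 a * q2 b - q3 a * q3 b)
       (q0 a * q1 b + q1 a * q0 b + q2 a * q3 b - q3 a * q2 b)
       (q0 a * q2 b - q1 a * q3 b + q2 a * q0 b + q3 a * q1 b)
       (q0 a * q3 b + q1 a * q2 b - q2 a * q1 b + q3 a * q0 b).

Definition qreal (r : R) : quat := Quat r 0 0 0.
Definition qre (a : quat) : R := q0 a.
Definition qsqn (a : quat) : R := q0 a ^+ 2 + q1 a ^+ 2 + q2 a ^+ 2 + q3 a ^+ 2.
Definition qabs (a : quat) : R := Num.sqrt (qsqn a).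

Definition two_sided_qbanach (V : completeNormedModType R)
    (lm : quat -> V -> V) (rm : V -> quat -> V) : Prop :=
  (forall v w a, rm (v + w) a = rm v a + rm w a) /\
  (forall v a b, rm v (qadd a b) = rm v a + rm v b) /\
  (forall v a b, rm (rm v a) b = rm v (qmul a b)) /\
  (forall v r, rm v (qreal r) = r *: v) /\
  (forall v w a, lm a (v + w) = lm a v + lm a w) /\
  (forall v a b, lm (qadd a b) v = lm a v + lm b v) /\
  (forall v a b, lm a (lm b v) = lm (qmul a b) v) /\
  (forall v r, lm (qreal r) v = r *: v) /\
  (forall v a b, lm a (rm v b) = rm (lm a v) b) /\
  (forall v a, `|rm v a| = `|v| * qabs a) /\
  (forall v a, `|lm a v| = qabs a * `|v|).

Definition K_quat (V : completeNormedModType R) (rm : V -> quat -> V) (T : op V) : Prop :=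
  right_lin_op rm T /\ closed_in (fun v : V => `|v|) setT T.

End Quat.

Section Cliff.
Variables (R : realType) (n : nat).

(* R_n: coefficients on the basis e_A, A a subset of {e_1..e_n}
   (generators indexed by 'I_n); e_A = e_{a1}...e_{ak}, a1<...<ak *)
Definition cliff := {ffun {set 'I_n} -> R}.

Definition symd (A B : {set 'I_n}) : {set 'I_n} := (A :\: B) :|: (B :\: A).

(* e_A e_B = cl_sign A B e_(symd A B), using e_i^2 = -1, e_i e_j = -e_j e_i *)
Definition cl_sign (A B : {set 'I_n}) : R :=
  (-1) ^+ (#|[set p : 'I_n * 'I_n | [&& p.1 \in A, p.2 \in B & (p.2 < p.1)%N]]|
           + #|A :&: B|).

Variable VR : completeNormedModType R.

(* V = V_R (x) R_n : v = sum_A v_A e_A *)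
Definition cV := {ffun {set 'I_n} -> VR}.

Definition cnorm (v : cV) : R := \sum_(A : {set 'I_n}) `|v A|.

Definition cl_rmul (v : cV) (a : cliff) : cV :=
  [ffun C => \sum_(A : {set 'I_n}) \sum_(B : {set 'I_n} | symd A B == C)
               (cl_sign A B * a B) *: v A].

(* paravectors R^{n+1}: s = s_0 + sum_i s_(i+1) e_(i+1) *)
Definition para := 'I_n.+1 -> R.
Definition pre (s : para) : R := s ord0.
Definition psqn (s : para) : R := \sum_(j < n.+1) s j ^+ 2.

(* T = T_0 + sum_i T_i e_i, Ts ord0 = T_0, Ts (lift ord0 i) = T for generator i;
   T v = sum_A T_0(v_A) e_A + sum_i sum_A T_i(v_A) e_i e_A *)
Definition para_dom (Ts : 'I_n.+1 -> op VR) : set cV :=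
  [set v | forall A j, dom (Ts j) (v A)].

Definition para_app (Ts : 'I_n.+1 -> op VR) (v : cV) : cV :=
  [ffun C => app (Ts ord0) (v C) +
     \sum_(i : 'I_n) cl_sign [set i] (symd [set i] C) *:
        app (Ts (lift ord0 i)) (v (symd [set i] C))].

Definition K_cliff (T : op cV) : Prop :=
  exists Ts : 'I_n.+1 -> op VR,
    (forall j, real_lin_op (Ts j) /\ closed_in (fun x : VR => `|x|) setT (Ts j)) /\
    dom T = para_dom Ts /\
    (forall v, dom T v -> app T v = para_app Ts v).

End Cliff.

(* Main.v *)
Require Import Defs.
From HB Require Import structures.
From mathcomp Require Import all_boot all_order all_algebra.
From mathcomp Require Import all_classical all_reals all_analysis.
Import Order.TTheory GRing.Theory Num.Theory.
Import numFieldNormedType.Exports.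
Local Open Scope classical_set_scope.
Local Open Scope ring_scope.
Set Implicit Arguments. Unset Strict Implicit.

Section Lin.
Variables (R : realType) (W : lmodType R) (T : op W).
Hypothesis Tlin : real_lin_op T.

Lemma Tdom0 : dom T 0. Proof. by case: Tlin. Qed.
Lemma TdomD v w : dom T v -> dom T w -> dom T (v + w).
Proof. by case: Tlin => _ [H _] dv dw; case: (H v w dv dw). Qed.
Lemma TappD v w : dom T v -> dom T w -> app T (v + w) = app T v + app T w.
Proof. by case: Tlin => _ [H _] dv dw; case: (H v w dv dw). Qed.
Lemma TdomZ (r : R) v : dom T v -> dom T (r *: v).
Proof. by case: Tlin => _ [_ H] dv; case: (H r v dv). Qed.
Lemma TappZ (r : R) v : dom T v -> app T (r *: v) = r *: app T v.
Proof. by case: Tlin => _ [_ H] dv; case: (H r v dv). Qed.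
Lemma Tapp0 : app T 0 = 0.
Proof. by rewrite -(scale0r 0) TappZ ?scale0r //; exact: Tdom0. Qed.
End Lin.

Record half_hyp (R : realType) (W : lmodType R) (T : op W) (E E' : W -> W) : Prop :=
  HalfHyp {
  hTlin : real_lin_op T;
  hEE : forall v, E (E v) = E v;
  hsumE : forall v, E v + E' v = v;
  hED : forall v w, E (v + w) = E v + E w;
  hEZ : forall (r : R) v, E (r *: v) = r *: E v;
  hE'D : forall v w, E' (v + w) = E' v + E' w;
  hdomE : E @` dom T `<=` dom T;
  hdomE' : E' @` dom T `<=` dom T;
  hranE : app T @` (E @` dom T) `<=` range E;
  hranE' : app T @` (E' @` dom T) `<=` range E' }.

Section Half.
Variables (R : realType) (W : lmodType R) (F0 : Type) (re sqn : F0 -> R).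
Variables (T : op W) (E E' : W -> W).
Hypothesis hh : half_hyp T E E'.
Let Tlin := hTlin hh.
Let EE := hEE hh.
Let sumE := hsumE hh.
Let ED := hED hh.
Let EZ := hEZ hh.
Let E'D := hE'D hh.
Let domE := hdomE hh.
Let domE' := hdomE' hh.
Let ranE := hranE hh.
Let ranE' := hranE' hh.

Lemma E0 : E 0 = 0.
Proof. have h := ED 0 0; rewrite addr0 in h; by apply/esym/(addrI (E 0)); rewrite addr0 -h. Qed.

Lemma EN v : E (- v) = - E v.
Proof. by rewrite -scaleN1r EZ scaleN1r. Qed.

Lemma EB v w : E (v - w) = E v - E w.
Proof. by rewrite ED EN. Qed.

Lemma EE'0 v : E (E' v) = 0.
Proof.
have := congr1 E (sumE v); rewrite ED EE => /eqP.
by rewrite -{2}(addr0 (E v)) => /eqP /addrI.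
Qed.

Lemma Efix y : range E y -> E y = y.
Proof. by case=> x _ <-; rewrite EE. Qed.

Lemma E'fixE y : range E' y -> E y = 0.
Proof. by case=> x _ <-; rewrite EE'0. Qed.

Lemma Edom v : dom T v -> dom T (E v).
Proof. by move=> dv; apply: domE; exists v. Qed.

Lemma Ecomm v : dom T v -> E (app T v) = app T (E v).
Proof.
move=> dv.
have dE : dom T (E v) by apply: domE; exists v.
have dE' : dom T (E' v) by apply: domE'; exists v.
rewrite -{1}(sumE v) (TappD Tlin dE dE') ED.
rewrite (Efix (ranE _)); last by exists (E v) => //; exists v.
have r' : range E' (app T (E' v)) by apply: ranE'; exists (E' v) => //; exists v.
by rewrite (E'fixE r') addr0.
Qed.

Lemma dom2E x : dom2 T x -> dom2 T (E x).
Proof. by case=> d1 d2; split; [exact: Edom | rewrite -Ecomm //; exact: Edom]. Qed.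

Lemma QE s x : dom2 T x -> Qs re sqn T s (E x) = E (Qs re sqn T s x).
Proof.
case=> d1 d2; rewrite /Qs ED EB !EZ !Ecomm //; exact: Edom.
Qed.

Lemma dom2_restr : dom2 (restr_op T E) = E @` dom2 T.
Proof.
rewrite eqEsubset; split => x.
  case=> [[v dv <-]] [w dw /= ew].
  have dx : dom T (E v) by apply: domE; exists v.
  exists (E v); last by rewrite EE.
  by split => //=; rewrite -ew; apply: domE; exists w.
case=> v [d1 d2] <-; split; first by exists v.
by exists (app T v) => //=; rewrite Ecomm.
Qed.

Lemma dom2_restr_sub x : dom2 (restr_op T E) x -> dom2 T x /\ E x = x.
Proof.
rewrite dom2_restr => -[v dv <-]; split; last by rewrite EE.
exact: dom2E.
Qed.

Lemma dom2_restrI x : dom2 T x -> E x = x -> dom2 (restr_op T E) x.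
Proof. by move=> dx ex; rewrite dom2_restr; exists x. Qed.

Lemma ranQ_restr s : ranQ re sqn (restr_op T E) s = E @` ranQ re sqn T s.
Proof.
rewrite eqEsubset; split => y.
  case=> x /dom2_restr_sub [dx ex] <-.
  by exists (Qs re sqn T s x); [exists x | rewrite -QE // ex].
case=> _ [x dx <-] <-; exists (E x); first exact: dom2_restrI (dom2E dx) (EE x).
exact: QE.
Qed.

Lemma ranQ_restr_sub s y : ranQ re sqn (restr_op T E) s y -> E y = y.
Proof. by rewrite ranQ_restr => -[z _ <-]; rewrite EE. Qed.


Variable (nrm : W -> R).
Hypothesis nrm0 : nrm 0 = 0.
Hypothesis nrm_ge0 : forall v, 0 <= nrm v.
Hypothesis Ebnd : exists C, forall v, nrm (E v) <= C * nrm v.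

Lemma rho_restr s : rhoS nrm re sqn setT T s -> rhoS nrm re sqn (range E) (restr_op T E) s.
Proof.
case=> B [h1 [h2 [C hC]]]; exists B; split; last split.
- move=> y ry; have [d Q] := h1 y I.
  have dE := dom2E d.
  have QEy : Qs re sqn T s (E (B y)) = y by rewrite QE // Q Efix.
  have eB : E (B y) = B y by rewrite -{2}QEy h2.
  split; last exact: Q.
  exact: dom2_restrI d eB.
- by move=> x /dom2_restr_sub [dx _]; exact: h2.
- by exists C => y _; exact: hC.
Qed.

Lemma dense_restr s : dense_in nrm setT (ranQ re sqn T s) ->
  dense_in nrm (range E) (ranQ re sqn (restr_op T E) s).
Proof.
move=> hd y ry e e0; case: Ebnd => C hC.
have c0 : 0 < `|C| + 1 by rewrite ltr_wpDl.
have [x rx hx] := hd y I (e / (`|C| + 1)) (divr_gt0 e0 c0).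
exists (E x); first by rewrite ranQ_restr; exists x.
rewrite -(Efix ry) -EB.
apply: (le_lt_trans (hC _)).
apply: (@le_lt_trans _ _ ((`|C| + 1) * nrm (y - x))).
  apply: ler_wpM2r; first exact: nrm_ge0.
  by apply: (le_trans (ler_norm C)); rewrite lerDl.
by rewrite -ltr_pdivlMl // mulrC.
Qed.

Lemma full_restr s : ranQ re sqn T s = setT ->
  ranQ re sqn (restr_op T E) s = range E.
Proof. by move=> h; rewrite ranQ_restr h. Qed.

Lemma ranQ_restr_range s : ranQ re sqn (restr_op T E) s `<=` range E.
Proof. by move=> y /ranQ_restr_sub <-; exists y. Qed.

Lemma dom2_restr0 : dom2 (restr_op T E) 0.
Proof.
apply: dom2_restrI; last exact: E0.
split; first exact: Tdom0 Tlin.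
by rewrite Tapp0 //; exact: Tdom0 Tlin.
Qed.

End Half.

Section Abstract.
Variables (R : realType) (W : lmodType R) (nrm : W -> R) (F0 : Type) (re sqn : F0 -> R).
Hypothesis nrm0 : nrm 0 = 0.

Lemma rho_sub (S : set W) (A : op W) s : rhoS nrm re sqn S A s -> S `<=` ranQ re sqn A s.
Proof. by case=> B [h1 _] y Sy; have [d q] := h1 y Sy; exists (B y). Qed.

Lemma rho_inj (S : set W) (A : op W) s : dom2 A 0 -> Qs re sqn A s 0 = 0 ->
  rhoS nrm re sqn S A s -> Q_injective re sqn A s.
Proof.
move=> d0 q0 [B [_ [h2 _]]] x dx qx.
by rewrite -(h2 x dx) qx -{1}q0 h2.
Qed.

Lemma rho_dense (S : set W) (A : op W) s : rhoS nrm re sqn S A s -> dense_in nrm S (ranQ re sqn A s).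
Proof.
move=> /rho_sub h y Sy e e0; exists y; first exact: h.
by rewrite subrr nrm0.
Qed.

Lemma sigmaSc_sub (S : set W) (A : op W) s : ranQ re sqn A s `<=` S ->
  sigmaSc nrm re sqn S A s -> sigmaS nrm re sqn S A s.
Proof.
move=> hs [_ _ hn] /rho_sub hr; apply: hn.
by rewrite eqEsubset; split.
Qed.

Lemma sigmaSr_sub (S : set W) (A : op W) s :
  sigmaSr nrm re sqn S A s -> sigmaS nrm re sqn S A s.
Proof. by move=> [_ hn] /rho_dense. Qed.

End Abstract.


Section Main.
Variables (R : realType) (W : lmodType R) (nrm : W -> R) (F0 : Type) (re sqn : F0 -> R).
Hypothesis nrm0 : nrm 0 = 0.
Hypothesis nrm_ge0 : forall v, 0 <= nrm v.
Hypothesis nrmD : forall v w, nrm (v + w) <= nrm v + nrm w.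
Variables (T : op W) (E1 E2 : W -> W).
Hypothesis Tlin : real_lin_op T.
Hypothesis E1D : forall v w, E1 (v + w) = E1 v + E1 w.
Hypothesis E1Z : forall (r : R) v, E1 (r *: v) = r *: E1 v.
Hypothesis E2D : forall v w, E2 (v + w) = E2 v + E2 w.
Hypothesis E2Z : forall (r : R) v, E2 (r *: v) = r *: E2 v.
Hypothesis E1B : exists C, forall v, nrm (E1 v) <= C * nrm v.
Hypothesis E2B : exists C, forall v, nrm (E2 v) <= C * nrm v.
Hypothesis Hd : decomp_hyps nrm re sqn T E1 E2.

Let EE1 : forall v, E1 (E1 v) = E1 v. Proof. by case: Hd => _ [h _]. Qed.
Let EE2 : forall v, E2 (E2 v) = E2 v. Proof. by case: Hd => _ [_ [h _]]. Qed.
Let sum12 : forall v, E1 v + E2 v = v. Proof. by case: Hd => _ [_ [_ [h _]]]. Qed.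
Let sum21 v : E2 v + E1 v = v. Proof. by rewrite addrC sum12. Qed.
Let HE1 : [/\ E1 @` dom T `<=` dom T, app T @` (E1 @` dom T) `<=` range E1 &
         closed_in nrm (range E1) (restr_op T E1)].
Proof. by case: Hd => _ [_ [_ [_ h]]]; apply: h; left. Qed.
Let HE2 : [/\ E2 @` dom T `<=` dom T, app T @` (E2 @` dom T) `<=` range E2 &
         closed_in nrm (range E2) (restr_op T E2)].
Proof. by case: Hd => _ [_ [_ [_ h]]]; apply: h; right. Qed.

Let hh1 : half_hyp T E1 E2.
Proof. by case: HE1 => ? ? _; case: HE2 => ? ? _; constructor. Qed.
Let hh2 : half_hyp T E2 E1.
Proof. by case: HE1 => ? ? _; case: HE2 => ? ? _; constructor. Qed.

Let Q := Qs re sqn T.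

Lemma dom2D x y : dom2 T x -> dom2 T y -> dom2 T (x + y).
Proof.
case=> dx dx' [dy dy']; split; first exact: TdomD.
by rewrite TappD //; exact: TdomD.
Qed.

Lemma QD s x y : dom2 T x -> dom2 T y -> Q s (x + y) = Q s x + Q s y.
Proof.
case=> dx dx' [dy dy']; rewrite /Q /Qs !TappD //.
rewrite !scalerDr opprD.
by rewrite (addrACA (app T (app T x)) (app T (app T y))) (addrACA (app T (app T x) - _)).
Qed.

Lemma dom2_0 : dom2 T 0.
Proof. by split; [exact: Tdom0 | rewrite Tapp0 //; exact: Tdom0]. Qed.

Lemma Q0 s : Q s 0 = 0.
Proof. by rewrite /Q /Qs !Tapp0 // !scaler0 subrr addr0. Qed.

Local Notation T1 := (restr_op T E1).
Local Notation T2 := (restr_op T E2).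

Lemma ranQ_sum s : ranQ re sqn T s = [set y + z | y in ranQ re sqn T1 s & z in ranQ re sqn T2 s].
Proof.
rewrite eqEsubset; split => y.
  case=> x dx <-.
  exists (Q s (E1 x)); first by rewrite (ranQ_restr re sqn hh1); exists (Q s x); [exists x | rewrite /Q (QE re sqn hh1 s dx)].
  exists (Q s (E2 x)); first by rewrite (ranQ_restr re sqn hh2); exists (Q s x); [exists x | rewrite /Q (QE re sqn hh2 s dx)].
  by rewrite /Q (QE re sqn hh1 s dx) (QE re sqn hh2 s dx) sum12.
case=> _ [x1 d1 <-] [_ [x2 d2 <-] <-].
have [dx1 _] := dom2_restr_sub hh1 d1.
have [dx2 _] := dom2_restr_sub hh2 d2.
by exists (x1 + x2); [exact: dom2D | exact: QD].
Qed.

Lemma ranQ_cap s : ranQ re sqn T1 s `&` ranQ re sqn T2 s = [set 0].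
Proof.
rewrite eqEsubset; split => y.
  case=> r1 r2; have h1 := ranQ_restr_sub hh1 r1; have h2 := ranQ_restr_sub hh2 r2.
  have := sum12 y; rewrite h1 h2 => /(congr1 (fun z => z - y)) /=.
  by rewrite addrK subrr.
move=> -> /=; split.
  by exists 0; [exact: dom2_restr0 hh1 | exact: Q0].
by exists 0; [exact: dom2_restr0 hh2 | exact: Q0].
Qed.

Lemma normC (C : R) u v : nrm u <= C * nrm v -> nrm u <= `|C| * nrm v.
Proof. move=> h; apply: (le_trans h); apply: ler_wpM2r => //; exact: ler_norm. Qed.

Lemma rho_iff s : rhoS nrm re sqn setT T s <->
  rhoS nrm re sqn (range E1) T1 s /\ rhoS nrm re sqn (range E2) T2 s.
Proof.
split; first by move=> h; split; [exact: (rho_restr hh1) | exact: (rho_restr hh2)].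
case=> [[B1 [a1 [b1 [C1 c1]]]] [B2 [a2 [b2 [C2 c2]]]]].
case: E1B => K1 k1; case: E2B => K2 k2.
exists (fun y => B1 (E1 y) + B2 (E2 y)); split; last split.
- move=> y _.
  have [d1 q1] := a1 (E1 y) (ex_intro2 _ _ y I erefl).
  have [d2 q2] := a2 (E2 y) (ex_intro2 _ _ y I erefl).
  have [dx1 _] := dom2_restr_sub hh1 d1.
  have [dx2 _] := dom2_restr_sub hh2 d2.
  split; first exact: dom2D.
  have := QD s dx1 dx2; rewrite /Q => ->; exact: (etrans (congr2 +%R q1 q2) (sum12 y)).
- move=> x dx.
  rewrite -(QE re sqn hh1 s dx) -(QE re sqn hh2 s dx).
  have e1 := b1 (E1 x) (dom2_restrI hh1 (dom2E hh1 dx) (EE1 x)).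
  have e2 := b2 (E2 x) (dom2_restrI hh2 (dom2E hh2 dx) (EE2 x)).
  by rewrite -[RHS]sum12; congr (_ + _); [exact: e1 | exact: e2].
- exists (`|C1| * `|K1| + `|C2| * `|K2|) => y _.
  apply: (le_trans (nrmD _ _)); rewrite mulrDl.
  apply: lerD.
    apply: (le_trans (normC (c1 _ (ex_intro2 _ _ y I erefl)))).
    by rewrite -mulrA; apply: ler_wpM2l => //; exact: normC.
  apply: (le_trans (normC (c2 _ (ex_intro2 _ _ y I erefl)))).
  by rewrite -mulrA; apply: ler_wpM2l => //; exact: normC.
Qed.


Lemma inj_iff s : Q_injective re sqn T s <->
  Q_injective re sqn T1 s /\ Q_injective re sqn T2 s.
Proof.
split.
  move=> h; split => x /= dx qx.
    by apply: h => //; case: (dom2_restr_sub hh1 dx).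
  by apply: h => //; case: (dom2_restr_sub hh2 dx).
case=> h1 h2 x dx qx.
have z1 : E1 x = 0.
  apply: h1; first exact (dom2_restrI hh1 (dom2E hh1 dx) (EE1 x)).
  by have := QE re sqn hh1 s dx; rewrite qx (E0 hh1).
have z2 : E2 x = 0.
  apply: h2; first exact (dom2_restrI hh2 (dom2E hh2 dx) (EE2 x)).
  by have := QE re sqn hh2 s dx; rewrite qx (E0 hh2).
by rewrite -(sum12 x) z1 z2 addr0.
Qed.

Lemma ranQ_add s x1 x2 : ranQ re sqn T1 s x1 -> ranQ re sqn T2 s x2 ->
  ranQ re sqn T s (x1 + x2).
Proof. by move=> r1 r2; rewrite ranQ_sum; exists x1 => //; exists x2. Qed.

Lemma dense_iff s : dense_in nrm setT (ranQ re sqn T s) <->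
  dense_in nrm (range E1) (ranQ re sqn T1 s) /\ dense_in nrm (range E2) (ranQ re sqn T2 s).
Proof.
split.
  by move=> h; split; [exact: (dense_restr hh1 nrm_ge0 E1B) | exact: (dense_restr hh2 nrm_ge0 E2B)].
case=> h1 h2 y _ e e0.
have e20 : 0 < e / 2 by rewrite divr_gt0.
have [x1 r1 n1] := h1 (E1 y) (ex_intro2 _ _ y I erefl) _ e20.
have [x2 r2 n2] := h2 (E2 y) (ex_intro2 _ _ y I erefl) _ e20.
exists (x1 + x2); first exact: ranQ_add.
have -> : y - (x1 + x2) = (E1 y - x1) + (E2 y - x2).
  by rewrite -{1}(sum12 y) opprD addrACA.
apply: (le_lt_trans (nrmD _ _)).
by rewrite [e](splitr e); apply: ltrD.
Qed.

Lemma full_iff s : ranQ re sqn T s = setT <->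
  ranQ re sqn T1 s = range E1 /\ ranQ re sqn T2 s = range E2.
Proof.
split; first by move=> h; split; [exact: (full_restr hh1) | exact: (full_restr hh2)].
case=> h1 h2; rewrite eqEsubset; split => // y _.
rewrite -(sum12 y); apply: ranQ_add.
  by rewrite h1; exists y.
by rewrite h2; exists y.
Qed.

Lemma sigmaSp_eq : sigmaSp re sqn T = sigmaSp re sqn T1 `|` sigmaSp re sqn T2.
Proof.
rewrite eqEsubset; split => s.
  case=> x [dx qx nx].
  have [z1|nz1] := eqVneq (E1 x) 0.
    right; exists (E2 x); split.
    - exact (dom2_restrI hh2 (dom2E hh2 dx) (EE2 x)).
    - by have := QE re sqn hh2 s dx; rewrite qx (E0 hh2).
    - by move=> z2; apply: nx; rewrite -(sum12 x) z1 z2 addr0.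
  left; exists (E1 x); split.
  - exact (dom2_restrI hh1 (dom2E hh1 dx) (EE1 x)).
  - by have := QE re sqn hh1 s dx; rewrite qx (E0 hh1).
  - exact/eqP.
case=> -[x [dx qx nx]].
  by exists x; split => //; case: (dom2_restr_sub hh1 dx).
by exists x; split => //; case: (dom2_restr_sub hh2 dx).
Qed.

Lemma sigmaS_eq : sigmaS nrm re sqn setT T =
  sigmaS nrm re sqn (range E1) T1 `|` sigmaS nrm re sqn (range E2) T2.
Proof.
rewrite eqEsubset; split => s /=.
  move=> h; have [r1|r1] := pselect (rhoS nrm re sqn (range E1) T1 s); last by left.
  have [r2|r2] := pselect (rhoS nrm re sqn (range E2) T2 s); last by right.
  by exfalso; apply: h; apply/rho_iff.
by case=> h /rho_iff [r1 r2]; apply: h.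
Qed.

Lemma inj_T1 s : rhoS nrm re sqn (range E1) T1 s -> Q_injective re sqn T1 s.
Proof. by apply: rho_inj; [exact: dom2_restr0 hh1 | exact: Q0]. Qed.
Lemma inj_T2 s : rhoS nrm re sqn (range E2) T2 s -> Q_injective re sqn T2 s.
Proof. by apply: rho_inj; [exact: dom2_restr0 hh2 | exact: Q0]. Qed.

Lemma rho_full1 s : rhoS nrm re sqn (range E1) T1 s -> ranQ re sqn T1 s = range E1.
Proof.
move=> hr; have h := rho_sub hr; rewrite eqEsubset; split => //.
exact: (ranQ_restr_range hh1).
Qed.
Lemma rho_full2 s : rhoS nrm re sqn (range E2) T2 s -> ranQ re sqn T2 s = range E2.
Proof.
move=> hr; have h := rho_sub hr; rewrite eqEsubset; split => //.
exact: (ranQ_restr_range hh2).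
Qed.

Lemma notsig s A (S : set W) : ~ sigmaS nrm re sqn S A s -> rhoS nrm re sqn S A s.
Proof. by move=> h; have [//|r] := pselect (rhoS nrm re sqn S A s); exfalso; apply: h. Qed.

Theorem generic_thm : thm17_concl nrm re sqn T E1 E2.
Proof.
rewrite /thm17_concl; cbv zeta.
split; first by move=> E [->|->] v dv; [exact: (Ecomm hh1) | exact: (Ecomm hh2)].
split; first by move=> E [->|->]; [exact: (dom2_restr hh1) | exact: (dom2_restr hh2)].
split; first by move=> s; split; [exact: ranQ_sum | exact: ranQ_cap].
split; first exact: sigmaS_eq.
split; first exact: sigmaSp_eq.
move=> disj.
have d12 s : sigmaS nrm re sqn (range E1) T1 s -> rhoS nrm re sqn (range E2) T2 s.
  move=> h1; apply: notsig => h2.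
  by have : (sigmaS nrm re sqn (range E1) T1 `&` sigmaS nrm re sqn (range E2) T2) s
    by []; rewrite disj.
have d21 s : sigmaS nrm re sqn (range E2) T2 s -> rhoS nrm re sqn (range E1) T1 s.
  move=> h2; apply: notsig => h1.
  by have : (sigmaS nrm re sqn (range E1) T1 `&` sigmaS nrm re sqn (range E2) T2) s
    by []; rewrite disj.
split.
  rewrite eqEsubset; split => s.
    case=> /inj_iff [i1 i2] /dense_iff [n1 n2] nf.
    have [f1|f1] := pselect (ranQ re sqn T1 s = range E1).
      right; split => // f2; apply: nf; exact/full_iff.
    by left; split.
  case=> -[i hd hf].
    have hs : ranQ re sqn T1 s `<=` range E1 by move=> y; move: (@ranQ_restr_range _ _ _ re sqn _ _ _ hh1 s y).
    have r2 := d12 _ (sigmaSc_sub hs (And3 i hd hf)).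
    split.
    - by apply/inj_iff; split => //; exact: inj_T2.
    - by apply/dense_iff; split => //; exact: rho_dense.
    - by move=> /full_iff [].
  have hs : ranQ re sqn T2 s `<=` range E2 by move=> y; move: (@ranQ_restr_range _ _ _ re sqn _ _ _ hh2 s y).
  have r1 := d21 _ (sigmaSc_sub hs (And3 i hd hf)).
  split.
  - by apply/inj_iff; split => //; exact: inj_T1.
  - by apply/dense_iff; split => //; exact: rho_dense.
  - by move=> /full_iff [].
rewrite eqEsubset; split => s.
  case=> /inj_iff [i1 i2] nd.
  have [n1|n1] := pselect (dense_in nrm (range E1) (ranQ re sqn T1 s)).
    by right; split => // n2; apply: nd; exact/dense_iff.
  by left; split.
case=> -[i hd].
  have r2 := d12 _ (sigmaSr_sub nrm0 (conj i hd)).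
  split; first by apply/inj_iff; split => //; exact: inj_T2.
  by move=> /dense_iff [].
have r1 := d21 _ (sigmaSr_sub nrm0 (conj i hd)).
split; first by apply/inj_iff; split => //; exact: inj_T1.
by move=> /dense_iff [].
Qed.

End Main.

Lemma cliff_lin (R : realType) n (VR : completeNormedModType R) (T : op (cV n VR)) :
  K_cliff T -> real_lin_op T.
Proof.
case=> Ts [hTs [hdom happ]].
have L j : real_lin_op (Ts j) by case: (hTs j).
split; [|split].
- by rewrite hdom => A j; rewrite ffunE; exact: Tdom0 (L j).
- move=> v w dv dw.
  have dvw : dom T (v + w).
    by move: dv dw; rewrite hdom => dv dw A j; rewrite ffunE; exact: TdomD.
  split => //; rewrite !happ //.
  move: dv dw; rewrite hdom => dv dw.
  apply/ffunP => C; rewrite !ffunE.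
  under eq_bigr => i _ do rewrite ffunE (TappD (L _) (dv _ _) (dw _ _)) scalerDr.
  by rewrite (TappD (L _) (dv _ _) (dw _ _)) big_split /= addrACA.
- move=> r v dv.
  have drv : dom T (r *: v).
    by move: dv; rewrite hdom => dv A j; rewrite ffunE; exact: TdomZ.
  split => //; rewrite !happ //.
  move: dv; rewrite hdom => dv.
  apply/ffunP => C; rewrite !ffunE.
  under eq_bigr => i _ do rewrite ffunE (TappZ (L _) _ (dv _ _)) scalerA mulrC -scalerA.
  by rewrite (TappZ (L _) _ (dv _ _)) scalerDr scaler_sumr.
Qed.

Lemma cnorm0 (R : realType) n (VR : completeNormedModType R) : cnorm (0 : cV n VR) = 0.
Proof. by rewrite /cnorm big1 // => A _; rewrite ffunE normr0. Qed.

Lemma cnorm_ge0 (R : realType) n (VR : completeNormedModType R) (v : cV n VR) : 0 <= cnorm v.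
Proof. by rewrite /cnorm sumr_ge0. Qed.

Lemma cnormD (R : realType) n (VR : completeNormedModType R) (v w : cV n VR) :
  cnorm (v + w) <= cnorm v + cnorm w.
Proof.
rewrite /cnorm -big_split /=; apply: ler_sum => A _.
by rewrite ffunE ler_normD.
Qed.

Unset Implicit Arguments.

Theorem mainTheorem17 (R : realType) :
  (* setting (a): two-sided quaternionic Banach space *)
  (forall (V : completeNormedModType R) (lm : quat R -> V -> V) (rm : V -> quat R -> V),
     two_sided_qbanach lm rm ->
     forall (T : op V) (E1 E2 : V -> V),
       K_quat rm T ->
       bdd_rlin rm (fun v : V => `|v|) E1 -> bdd_rlin rm (fun v : V => `|v|) E2 ->
       decomp_hyps (fun v : V => `|v|) (@qre R) (@qsqn R) T E1 E2 ->
       thm17_concl (fun v : V => `|v|) (@qre R) (@qsqn R) T E1 E2) /\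
  (* setting (b): V = V_R (x) R_n, operators of paravector type *)
  (forall (n : nat) (VR : completeNormedModType R) (T : op (cV n VR))
          (E1 E2 : cV n VR -> cV n VR),
     K_cliff T ->
     bdd_rlin (@cl_rmul R n VR) (@cnorm R n VR) E1 ->
     bdd_rlin (@cl_rmul R n VR) (@cnorm R n VR) E2 ->
     decomp_hyps (@cnorm R n VR) (@pre R n) (@psqn R n) T E1 E2 ->
     thm17_concl (@cnorm R n VR) (@pre R n) (@psqn R n) T E1 E2).
Proof.
split.
  move=> V lm rm _ T E1 E2 [[Tlin _] _] [E1D [E1Z [_ E1B]]] [E2D [E2Z [_ E2B]]] Hd.
  apply: generic_thm => //;
    first [exact: normr0 | by move=> v /= | by move=> v w /=; exact: ler_normD].
move=> n VR T E1 E2 hK [E1D [E1Z [_ E1B]]] [E2D [E2Z [_ E2B]]] Hd.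
apply: generic_thm => //;
  first [exact: cnorm0 | exact: cnorm_ge0 | exact: cnormD | exact: cliff_lin].
Qed.
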